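(* Let $L$ be an algebraic frame, $X_L$ its Priestley space, and $Y_L$ the spatial part of $X_L$. The following are equivalent: (1) $L$ is a coherent frame; (2) $X_L$ is a coherent L-space; (3) $Y_L$ is a spectral space.
   Context: A frame is a complete lattice satisfying $a\wedge\bigvee S=\bigvee\{a\wedge s\mid s\in S\}$. In a frame $L$, $a\ll b$ means whenever $b\le\bigvee S$ there is finite $T\subseteq S$ with $a\le\bigvee T$; $a$ is compact if $a\ll a$; $K(L)$ is the set of compact elements; $L$ is compact if its top is compact. $L$ is algebraic if $a=\bigvee\{b\in K(L)\mid b\le a\}$ for all $a$; arithmetic if algebraic and $\ll$ is stable ($a\ll b,c$ implies $a\ll b\wedge c$); coherent if arithmetic and compact. A Priestley space is a Stone space $X$ with a partial order such that clopen upsets separate points. An L-space is a Priestley space in which the downset of each clopen set is clopen and the closure of each open upset is open. ${\sf ClopUp}(X)$ is the set of clopen upsets; $\mathrm{cl}$ denotes closure. The Priestley space $X_L$ is the set of prime filters of $L$ ordered by inclusion with topology generated by the sets $\varphi(a)=\{x\mid a\in x\}$ and their complements. The spatial part of $X$ is $Y=\{y\in X\mid{\downarrow}y\text{ clopen}\}$, topologized by declaring $V\subseteq Y$ open iff $V=U\cap Y$ for some $U\in{\sf ClopUp}(X)$. A Scott upset is a closed upset $F$ with $\min F\subseteq Y$; ${\sf ClopSUp}(X)$ is the set of clopen Scott upsets. For $U,V\in{\sf ClopUp}(X)$, $V\ll U$ means that for every open upset $W$, $U\subseteq\mathrm{cl}\,W$ implies $V\subseteq W$; $\ker U=\bigcup\{V\in{\sf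 ClopUp}(X)\mid V\ll U\}$; $\mathrm{core}\,U=\bigcup\{V\in{\sf ClopSUp}(X)\mid V\subseteq U\}$. A coherent L-space is an L-space $X$ such that $\mathrm{core}\,U$ is dense in $U$ for each $U\in{\sf ClopUp}(X)$, $\ker(U\cap V)=\ker U\cap\ker V$ for all $U,V\in{\sf ClopUp}(X)$, and $X=\ker X$. A spectral space is a compact sober space with a basis of compact open sets in which the intersection of two compact open sets is compact. *)

(* Defs.v *)
From Stdlib Require Import List.

Set Implicit Arguments.

Record Frame := {
  fcar :> Type;
  fle : fcar -> fcar -> Prop;
  fle_refl : forall a, fle a a;
  fle_trans : forall a b c, fle a b -> fle b c -> fle a c;
  fle_antisym : forall a b, fle a b -> fle b a -> a = b;
  fsup : (fcar -> Prop) -> fcar;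
  fsup_ub : forall (S : fcar -> Prop) a, S a -> fle a (fsup S);
  fsup_least : forall (S : fcar -> Prop) b,
      (forall a, S a -> fle a b) -> fle (fsup S) b;
  fmeet : fcar -> fcar -> fcar;
  fmeet_lb1 : forall a b, fle (fmeet a b) a;
  fmeet_lb2 : forall a b, fle (fmeet a b) b;
  fmeet_glb : forall a b c, fle c a -> fle c b -> fle c (fmeet a b);
  fdistr : forall a (S : fcar -> Prop),
      fmeet a (fsup S) = fsup (fun c => exists s, S s /\ c = fmeet a s)
}.

Section FrameNotions.
Variable L : Frame.

Definition ftop : L := fsup L (fun _ => True).
Definition fbot : L := fsup L (fun _ => False).
Definition fjoin (a b : L) : L := fsup L (fun c => c = a \/ c = b).

Definition fsup_list (l : list L) : L := fsup L (fun c => In c l).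

Definition way_below (a b : L) : Prop :=
  forall S : L -> Prop, fle L b (fsup L S) ->
    exists l : list L, (forall c, In c l -> S c) /\ fle L a (fsup_list l).

Definition fcompact (a : L) : Prop := way_below a a.

Definition algebraic_frame : Prop :=
  forall a : L, a = fsup L (fun b => fcompact b /\ fle L b a).

Definition arithmetic_frame : Prop :=
  algebraic_frame /\
  forall a b c, way_below a b -> way_below a c -> way_below a (fmeet L b c).

Definition coherent_frame : Prop := arithmetic_frame /\ fcompact ftop.

Definition prime_filter (x : L -> Prop) : Prop :=
  (forall a b, x a -> fle L a b -> x b) /\
  (forall a b, x a -> x b -> x (fmeet L a b)) /\
  x ftop /\
  ~ x fbot /\
  (forall a b, x (fjoin a b) -> x a \/ x b).

End FrameNotions.

Section Topology.
Variable T : Type.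
Variable opn : (T -> Prop) -> Prop.

Definition sub (A B : T -> Prop) : Prop := forall x, A x -> B x.
Definition seteq (A B : T -> Prop) : Prop := forall x, A x <-> B x.
Definition setI (A B : T -> Prop) : T -> Prop := fun x => A x /\ B x.
Definition setC (A : T -> Prop) : T -> Prop := fun x => ~ A x.

Definition is_topology : Prop :=
  opn (fun _ => True) /\
  (forall U V, opn U -> opn V -> opn (setI U V)) /\
  (forall F : (T -> Prop) -> Prop, (forall U, F U -> opn U) ->
     opn (fun x => exists U, F U /\ U x)) /\
  (forall U V, seteq U V -> opn U -> opn V).

Definition closed (A : T -> Prop) : Prop := opn (setC A).
Definition clopen (A : T -> Prop) : Prop := opn A /\ closed A.

Definition closure (A : T -> Prop) : T -> Prop :=
  fun x => forall U, opn U -> U x -> exists y, U y /\ A y.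

Definition compact_set (K : T -> Prop) : Prop :=
  forall F : (T -> Prop) -> Prop, (forall U, F U -> opn U) ->
    (forall x, K x -> exists U, F U /\ U x) ->
    exists l : list (T -> Prop), (forall U, In U l -> F U) /\
      (forall x, K x -> exists U, In U l /\ U x).

Definition compact_space : Prop := compact_set (fun _ => True).

Definition hausdorff : Prop :=
  forall x y, x <> y -> exists U V, opn U /\ opn V /\ U x /\ V y /\
    forall z, ~ (U z /\ V z).

Definition zero_dimensional : Prop :=
  forall U x, opn U -> U x -> exists V, clopen V /\ V x /\ sub V U.

Definition stone_space : Prop :=
  is_topology /\ compact_space /\ hausdorff /\ zero_dimensional.

Definition irreducible_closed (C : T -> Prop) : Prop :=
  closed C /\ (exists x, C x) /\
  forall A B, closed A -> closed B -> sub C (fun x => A x \/ B x) ->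
    sub C A \/ sub C B.

Definition sober : Prop :=
  forall C, irreducible_closed C ->
    exists x, seteq C (closure (fun z => z = x)) /\
      forall x', seteq C (closure (fun z => z = x')) -> x' = x.

Definition compact_open (U : T -> Prop) : Prop := opn U /\ compact_set U.

Definition spectral_space : Prop :=
  is_topology /\ compact_space /\ sober /\
  (forall U x, opn U -> U x -> exists K, compact_open K /\ K x /\ sub K U) /\
  (forall K1 K2, compact_open K1 -> compact_open K2 -> compact_set (setI K1 K2)).

Definition generated_open (B : (T -> Prop) -> Prop) (U : T -> Prop) : Prop :=
  forall x, U x -> exists l : list (T -> Prop),
    (forall s, In s l -> B s) /\ (forall s, In s l -> s x) /\
    (forall y, (forall s, In s l -> s y) -> U y).

Variable le : T -> T -> Prop.

Definition partial_order : Prop :=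
  (forall x, le x x) /\ (forall x y z, le x y -> le y z -> le x z) /\
  (forall x y, le x y -> le y x -> x = y).

Definition upset (A : T -> Prop) : Prop := forall x y, A x -> le x y -> A y.
Definition downset_of (A : T -> Prop) : T -> Prop :=
  fun y => exists x, A x /\ le y x.

Definition clopen_upset (U : T -> Prop) : Prop := clopen U /\ upset U.

Definition priestley_space : Prop :=
  stone_space /\ partial_order /\
  forall x y, ~ le x y -> exists U, clopen_upset U /\ U x /\ ~ U y.

Definition L_space : Prop :=
  priestley_space /\
  (forall U, clopen U -> clopen (downset_of U)) /\
  (forall U, opn U -> upset U -> opn (closure U)).

Definition spatial_pt (y : T) : Prop := clopen (fun z => le z y).

Definition minimal_in (F : T -> Prop) (x : T) : Prop :=
  F x /\ forall z, F z -> le z x -> z = x.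

Definition scott_upset (F : T -> Prop) : Prop :=
  closed F /\ upset F /\ forall x, minimal_in F x -> spatial_pt x.

Definition clopen_scott_upset (F : T -> Prop) : Prop :=
  clopen F /\ scott_upset F.

Definition sp_way_below (V U : T -> Prop) : Prop :=
  forall W, opn W -> upset W -> sub U (closure W) -> sub V W.

Definition ker (U : T -> Prop) : T -> Prop :=
  fun x => exists V, clopen_upset V /\ sp_way_below V U /\ V x.

Definition core (U : T -> Prop) : T -> Prop :=
  fun x => exists V, clopen_scott_upset V /\ sub V U /\ V x.

Definition coherent_L_space : Prop :=
  L_space /\
  (forall U, clopen_upset U -> sub U (closure (core U))) /\
  (forall U V, clopen_upset U -> clopen_upset V ->
     seteq (ker (setI U V)) (setI (ker U) (ker V))) /\
  (forall x, ker (fun _ => True) x).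

End Topology.

Section Dual.
Variable L : Frame.

Definition XL : Type := { x : L -> Prop | @prime_filter L x }.

Definition XL_le (x y : XL) : Prop :=
  forall a, proj1_sig x a -> proj1_sig y a.

Definition phi (a : L) : XL -> Prop := fun x => proj1_sig x a.

Definition XL_subbasis (s : XL -> Prop) : Prop :=
  exists a : L, s = phi a \/ s = setC (phi a).

Definition XL_open : (XL -> Prop) -> Prop := generated_open XL_subbasis.

Definition YL : Type := { y : XL | spatial_pt XL_open XL_le y }.

Definition YL_open (V : YL -> Prop) : Prop :=
  exists U : XL -> Prop, clopen_upset XL_open XL_le U /\
    forall y : YL, V y <-> U (proj1_sig y).

End Dual.

(* Main.v *)
Require Import Defs.
From Stdlib Require Import List Classical FunctionalExtensionality PropExtensionality ProofIrrelevance IndefiniteDescription.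
Import ListNotations.

Lemma set_ext {T : Type} (A B : T -> Prop) : (forall x, A x <-> B x) -> A = B.
Proof. intro H. apply functional_extensionality; intro x. apply propositional_extensionality; auto. Qed.

Section FrameFacts.
Variable L : Frame.
Local Notation "a ≤ b" := (fle L a b) (at level 70).
Local Notation "a ⊓ b" := (fmeet L a b) (at level 40, left associativity).
Local Notation "a ⊔ b" := (fjoin L a b) (at level 50, left associativity).
Local Notation "⊤" := (ftop L).
Local Notation "⊥" := (fbot L).

Lemma lr (a : L) : a ≤ a. Proof. apply fle_refl. Qed.
Lemma lt (a b c : L) : a ≤ b -> b ≤ c -> a ≤ c. Proof. apply fle_trans. Qed.
Lemma la (a b : L) : a ≤ b -> b ≤ a -> a = b. Proof. apply fle_antisym. Qed.
Hint Resolve lr fmeet_lb1 fmeet_lb2 : core.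

Lemma top_max (a : L) : a ≤ ⊤. Proof. unfold ftop. apply fsup_ub. exact I. Qed.
Lemma bot_min (a : L) : ⊥ ≤ a. Proof. unfold fbot. apply fsup_least. intros c []. Qed.
Lemma join_l (a b : L) : a ≤ a ⊔ b. Proof. unfold fjoin. apply fsup_ub. auto. Qed.
Lemma join_r (a b : L) : b ≤ a ⊔ b. Proof. unfold fjoin. apply fsup_ub. auto. Qed.
Lemma join_lub (a b c : L) : a ≤ c -> b ≤ c -> a ⊔ b ≤ c.
Proof. intros. unfold fjoin. apply fsup_least. intros x [->| ->]; auto. Qed.
Hint Resolve top_max bot_min join_l join_r : core.

Lemma meet_comm (a b : L) : a ⊓ b = b ⊓ a.
Proof. apply la; apply fmeet_glb; auto. Qed.
Lemma meet_mono (a b c d : L) : a ≤ c -> b ≤ d -> a ⊓ b ≤ c ⊓ d.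
Proof. intros. apply fmeet_glb. eapply lt; [apply fmeet_lb1|auto]. eapply lt; [apply fmeet_lb2|auto]. Qed.
Lemma join_mono (a b c d : L) : a ≤ c -> b ≤ d -> a ⊔ b ≤ c ⊔ d.
Proof. intros. apply join_lub. eapply lt; [eassumption|auto]. eapply lt; [eassumption|auto]. Qed.
Lemma sup_mono (S T : L -> Prop) : (forall a, S a -> exists b, T b /\ a ≤ b) -> fsup L S ≤ fsup L T.
Proof. intro H. apply fsup_least. intros a Sa. destruct (H a Sa) as [b [Tb ab]]. eapply lt; [exact ab|]. apply fsup_ub; auto. Qed.

Lemma distr_sup (a : L) (S : L -> Prop) : a ⊓ fsup L S ≤ fsup L (fun c => exists s, S s /\ c = a ⊓ s).
Proof. rewrite fdistr. auto. Qed.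

Lemma distr (a b c : L) : a ⊓ (b ⊔ c) ≤ (a ⊓ b) ⊔ (a ⊓ c).
Proof. unfold fjoin at 1. eapply lt. apply distr_sup. apply fsup_least. intros x [s [[-> | ->] ->]]; auto. Qed.

Lemma distr2 (m c d : L) : (m ⊔ c) ⊓ (m ⊔ d) ≤ m ⊔ (c ⊓ d).
Proof.
  eapply lt. apply distr. apply join_lub.
  - eapply lt. apply fmeet_lb2. auto. 
  - rewrite meet_comm. eapply lt. apply distr. apply join_lub.
    + eapply lt. apply fmeet_lb2. auto.
    + eapply lt; [|apply join_r]. rewrite meet_comm. auto.
Qed.

Definition imp (a b : L) : L := fsup L (fun c => c ⊓ a ≤ b).
Lemma imp_spec (a b c : L) : c ≤ imp a b <-> c ⊓ a ≤ b.
Proof.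
  split; intro H.
  - eapply lt. apply meet_mono. exact H. apply lr.
    rewrite meet_comm. eapply lt. apply distr_sup. apply fsup_least.
    intros x [s [Hs ->]]. rewrite meet_comm. auto.
  - unfold imp. apply fsup_ub. auto.
Qed.

Definition meet_list (l : list L) : L := fold_right (fmeet L) ⊤ l.
Lemma meet_list_spec (l : list L) (c : L) : c ≤ meet_list l <-> forall x, In x l -> c ≤ x.
Proof.
  induction l as [|y l IH]; simpl; split.
  - intros _ x [].
  - auto.
  - intros H x [->|Hx]. eapply lt; [exact H|]. auto.
    apply IH; auto. eapply lt; [exact H|]. auto.
  - intro H. apply fmeet_glb; auto. apply IH; auto.
Qed.
Lemma meet_list_lb (l : list L) x : In x l -> meet_list l ≤ x.
Proof. intro. apply (proj1 (meet_list_spec l _) (lr _)); auto. Qed.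

Lemma sup_list_ub (l : list L) x : In x l -> x ≤ fsup_list L l.
Proof. intro. unfold fsup_list. apply fsup_ub. auto. Qed.
Lemma sup_list_least (l : list L) c : (forall x, In x l -> x ≤ c) -> fsup_list L l ≤ c.
Proof. intro. unfold fsup_list. apply fsup_least. auto. Qed.
Lemma sup_list_sub (l l' : list L) : (forall x, In x l -> In x l') -> fsup_list L l ≤ fsup_list L l'.
Proof. intro H. apply sup_list_least. intros. apply sup_list_ub. auto. Qed.
Lemma sup_list_nil : fsup_list L [] = ⊥.
Proof. apply la. apply sup_list_least. intros _ []. auto. Qed.
Lemma sup_list_cons x l : fsup_list L (x :: l) ≤ x ⊔ fsup_list L l.
Proof. apply sup_list_least. intros y [->|H]. auto. eapply lt; [|apply join_r]. apply sup_list_ub; auto. Qed.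
Lemma sup_list_app l1 l2 : fsup_list L (l1 ++ l2) ≤ fsup_list L l1 ⊔ fsup_list L l2.
Proof. apply sup_list_least. intros y H. apply in_app_or in H as [H|H].
  eapply lt; [|apply join_l]. apply sup_list_ub; auto.
  eapply lt; [|apply join_r]. apply sup_list_ub; auto. Qed.

Lemma list_split_join (P : L -> Prop) (c : L) (l : list L) :
  (forall x, In x l -> P x \/ x = c) ->
  exists l', (forall x, In x l' -> P x) /\ fsup_list L l ≤ fsup_list L l' ⊔ c.
Proof.
  induction l as [|y l IH]; intro H.
  - exists []. split. intros _ []. rewrite sup_list_nil. auto.
  - destruct IH as [l' [H1 H2]]. intros; apply H; simpl; auto.
    destruct (H y (or_introl eq_refl)) as [Py| ->].
    + exists (y :: l'). split. intros x [->|Hx]; auto.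
      eapply lt. apply sup_list_cons. apply join_lub.
      eapply lt; [|apply join_l]. apply sup_list_ub. simpl; auto.
      eapply lt. exact H2. apply join_mono; auto. apply sup_list_sub. simpl; auto.
    + exists l'. split; auto. eapply lt. apply sup_list_cons. apply join_lub; auto.
Qed.

Lemma list_split_meet (P : L -> Prop) (c : L) (l : list L) :
  (forall x, In x l -> P x \/ x = c) ->
  exists l', (forall x, In x l' -> P x) /\ meet_list l' ⊓ c ≤ meet_list l.
Proof.
  induction l as [|y l IH]; intro H.
  - exists []. split. intros _ []. simpl. auto.
  - destruct IH as [l' [H1 H2]]. intros; apply H; simpl; auto.
    destruct (H y (or_introl eq_refl)) as [Py| ->].
    + exists (y :: l'). split. intros x [->|Hx]; auto.
      simpl. apply fmeet_glb. eapply lt. apply fmeet_lb1. apply fmeet_lb1.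
      eapply lt; [|exact H2]. apply meet_mono; auto.
    + exists l'. split; auto. simpl. apply fmeet_glb; auto.
Qed.

Lemma wb_left (a a' b : L) : a' ≤ a -> way_below L a b -> way_below L a' b.
Proof. intros H1 H2 S HS. destruct (H2 S HS) as [l [Hl Hl']]. exists l. split; auto. eapply lt; eauto. Qed.
Lemma wb_right (a b b' : L) : way_below L a b -> b ≤ b' -> way_below L a b'.
Proof. intros H1 H2 S HS. apply H1. eapply lt; eauto. Qed.
Lemma wb_le (a b : L) : way_below L a b -> a ≤ b.
Proof. intro H. destruct (H (fun c => c = b)) as [l [Hl Hl']]. apply fsup_ub; auto.
  eapply lt. exact Hl'. apply sup_list_least. intros x Hx. rewrite (Hl x Hx). auto. Qed.
Lemma wb_join (a b c : L) : way_below L a c -> way_below L b c -> way_below L (a ⊔ b) c.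
Proof. intros Ha Hb S HS. destruct (Ha S HS) as [l1 [H1 H1']]. destruct (Hb S HS) as [l2 [H2 H2']].
  exists (l1 ++ l2). split. intros x Hx. apply in_app_or in Hx as [Hx|Hx]; auto.
  apply join_lub. eapply lt. exact H1'. apply sup_list_sub. intros; apply in_or_app; auto.
  eapply lt. exact H2'. apply sup_list_sub. intros; apply in_or_app; auto. Qed.
Lemma wb_bot (c : L) : way_below L ⊥ c.
Proof. intros S _. exists []. split. intros _ []. rewrite sup_list_nil. auto. Qed.
Lemma wb_list (l : list L) (c : L) : (forall x, In x l -> way_below L x c) -> way_below L (fsup_list L l) c.
Proof.
  induction l as [|y l IH]; intro H.
  - rewrite sup_list_nil. apply wb_bot.
  - eapply wb_left. apply sup_list_cons. apply wb_join. apply H; simpl; auto. apply IH. intros; apply H; simpl; auto.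
Qed.
Lemma compact_list (l : list L) : (forall x, In x l -> fcompact L x) -> fcompact L (fsup_list L l).
Proof. intro H. unfold fcompact. apply wb_list. intros x Hx. eapply wb_right. apply H; auto. apply sup_list_ub; auto. Qed.

Hypothesis alg : algebraic_frame L.

Lemma alg_wb (a b : L) : way_below L a b <-> exists k, fcompact L k /\ a ≤ k /\ k ≤ b.
Proof.
  split.
  - intro H. destruct (H (fun k => fcompact L k /\ k ≤ b)) as [l [Hl Hl']].
    rewrite <- (alg b) at 1. auto.
    exists (fsup_list L l). split. apply compact_list. intros; apply Hl; auto.
    split; auto. apply sup_list_least. intros; apply Hl; auto.
  - intros [k [Hk [H1 H2]]]. eapply wb_left. exact H1. eapply wb_right. exact Hk. exact H2.
Qed.

Lemma alg_compact_below (a b : L) : ~ a ≤ b -> exists k, fcompact L k /\ k ≤ a /\ ~ k ≤ b.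
Proof.
  intro H. apply NNPP. intro H'. apply H. rewrite (alg a). apply fsup_least.
  intros k [Hk Hka]. apply NNPP. intro. apply H'. eauto.
Qed.

Lemma stable_iff_meets :
  (forall a b c, way_below L a b -> way_below L a c -> way_below L a (b ⊓ c)) <->
  (forall k1 k2, fcompact L k1 -> fcompact L k2 -> fcompact L (k1 ⊓ k2)).
Proof.
  split.
  - intros H k1 k2 H1 H2. apply H. eapply wb_left; [|exact H1]. auto. eapply wb_left; [|exact H2]. auto.
  - intros H a b c Hb Hc. apply alg_wb in Hb as [k1 [K1 [A1 B1]]]. apply alg_wb in Hc as [k2 [K2 [A2 B2]]].
    apply alg_wb. exists (k1 ⊓ k2). split; auto. split; apply meet_mono || apply fmeet_glb; auto.
Qed.

End FrameFacts.


Section Zorn.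
Variable T : Type.
Definition incl (A B : T -> Prop) := forall x, A x -> B x.
Definition chain (C : (T -> Prop) -> Prop) := forall a b, C a -> C b -> incl a b \/ incl b a.
Variable s0 : T -> Prop.
Definition bigU (C : (T -> Prop) -> Prop) : T -> Prop := fun x => s0 x \/ exists s, C s /\ s x.

Section Tower.
Variable g : (T -> Prop) -> (T -> Prop).
Hypothesis g_ext : forall s, incl s (g s).

Inductive tower : (T -> Prop) -> Prop :=
| tw0 : tower s0
| tw1 : forall s, tower s -> tower (g s)
| tw2 : forall C, (forall s, C s -> tower s) -> chain C -> tower (bigU C).

Lemma incl_eq a b : incl a b -> incl b a -> a = b.
Proof. intros. apply set_ext. split; auto. Qed.

Lemma tower_s0 s : tower s -> incl s0 s.
Proof.
  induction 1; intros x Hx.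
  - auto.
  - apply g_ext. auto.
  - left; auto.
Qed.

Definition extreme c := forall t, tower t -> incl t c -> ~ incl c t -> incl (g t) c.

Lemma towA c : tower c -> extreme c -> forall t, tower t -> incl t c \/ incl (g c) t.
Proof.
  intros Hc Ec t Ht. induction Ht as [|s Hs IH|C HC IH Hch].
  - left. apply tower_s0; auto.
  - destruct IH as [H|H].
    + destruct (classic (incl c s)) as [H'|H'].
      * right. rewrite (incl_eq _ _ H H'). intros x; auto.
      * left. apply Ec; auto.
    + right. intros x Hx. apply g_ext. auto.
  - destruct (classic (exists s, C s /\ incl (g c) s)) as [[s [Cs Hs]]|H].
    + right. intros x Hx. right. exists s. auto.
    + left. intros x [Hx|[s [Cs Hx]]].
      * apply tower_s0; auto.
      * destruct (IH s Cs) as [H'|H']; auto. exfalso; eauto.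
Qed.

Lemma towB c : tower c -> extreme c.
Proof.
  induction 1 as [|c Hc IH|C HC IH Hch].
  - intros t Ht H1 H2. exfalso. apply H2. apply tower_s0; auto.
  - intros t Ht H1 H2. destruct (towA c Hc IH t Ht) as [H|H].
    + destruct (classic (incl c t)) as [H'|H'].
      * rewrite (incl_eq _ _ H H'). intros x; auto.
      * intros x Hx. apply g_ext. apply (IH t Ht H H'); auto.
    + exfalso. apply H2. auto.
  - intros t Ht H1 H2.
    assert (exists c, C c /\ ~ incl (g c) t) as [c [Cc Hc]].
    { apply NNPP. intro H. apply H2. intros x [Hx|[s [Cs Hx]]].
      apply tower_s0; auto. apply NNPP. intro. apply H. exists s. split; auto. intro H3. match goal with H0 : ~ t x |- _ => apply H0 end. apply H3. apply g_ext. auto. }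
    destruct (towA c (HC c Cc) (IH c Cc) t Ht) as [H|H]; [|contradiction].
    destruct (classic (incl c t)) as [H'|H'].
    + assert (exists x, bigU C x /\ ~ t x) as [x [Hx Hnx]].
      { apply NNPP. intro H3. apply H2. intros x Hx. apply NNPP. intro. apply H3. eauto. }
      destruct Hx as [Hx|[c' [Cc' Hx]]].
      * exfalso. apply Hnx. apply tower_s0; auto.
      * destruct (towA c (HC c Cc) (IH c Cc) c' (HC c' Cc')) as [H4|H4].
        -- exfalso. apply Hnx. apply H'. auto.
        -- rewrite (incl_eq _ _ H H'). intros y Hy. right. exists c'. auto.
    + intros y Hy. right. exists c. split; auto. apply (IH c Cc t Ht H H'). auto.
Qed.

Lemma tower_chain : chain tower.
Proof.
  intros a b Ha Hb. destruct (towA a Ha (towB a Ha) b Hb) as [H|H]; auto.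
  left. intros x Hx. apply H. apply g_ext. auto.
Qed.

End Tower.

Variable P : (T -> Prop) -> Prop.
Hypothesis Hcl : forall C, (forall s, C s -> P s /\ incl s0 s) -> chain C -> P (bigU C).

Lemma zorn_sets : exists m, P m /\ incl s0 m /\ forall t, P t -> incl m t -> incl t m.
Proof.
  apply NNPP; intro Hn.
  assert (H : forall s, P s -> incl s0 s -> exists t, P t /\ incl s t /\ ~ incl t s).
  { intros s Ps Hs. apply NNPP; intro H. apply Hn. exists s. split; [|split]; auto.
    intros t Pt st. apply NNPP; intro nts. apply H. exists t; auto. }
  assert (G: forall s, {t | incl s t /\ (P s -> incl s0 s -> P t /\ ~ incl t s)}).
  { intro s. apply constructive_indefinite_description.
    destruct (classic (P s /\ incl s0 s)) as [[Ps Hs]|Hns].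
    - destruct (H s Ps Hs) as [t [Pt [st nts]]]. exists t. auto.
    - exists s. split. intros x; auto. intros Ps Hs; exfalso; auto. }
  set (g := fun s => proj1_sig (G s)).
  assert (gext : forall s, incl s (g s)) by (intro s; exact (proj1 (proj2_sig (G s)))).
  assert (gP : forall s, P s -> incl s0 s -> P (g s) /\ ~ incl (g s) s) by (intro s; exact (proj2 (proj2_sig (G s)))).
  assert (TP : forall s, tower g s -> P s).
  { induction 1 as [|s Hs IH|C HC IH Hch].
    - replace s0 with (bigU (fun _ => False)). apply Hcl. intros _ []. intros _ _ [].
      apply set_ext. intro x. unfold bigU. split. intros [H1|[_ [[] _]]]; auto. auto.
    - apply gP; auto. apply (tower_s0 g gext); auto.
    - apply Hcl; auto. intros s Cs. split; auto. apply (tower_s0 g gext); auto. }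
  set (U := bigU (tower g)).
  assert (TU : tower g U) by (apply tw2; auto; apply tower_chain; auto).
  assert (HU := gP U (TP U TU) (tower_s0 g gext U TU)).
  apply (proj2 HU). intros x Hx. right. exists (g U). split; auto. apply tw1; auto.
Qed.

Variable Bad : list T -> Prop.
Definition FGood (A : T -> Prop) := forall l, (forall t, In t l -> A t) -> ~ Bad l.

End Zorn.
Arguments FGood {T}.

Lemma zorn_fin (T : Type) (Bad : list T -> Prop) (A0 : T -> Prop) :
  FGood Bad A0 -> exists A, (forall t, A0 t -> A t) /\ FGood Bad A /\
     forall t, FGood Bad (fun s => A s \/ s = t) -> A t.
Proof.
  intro H0.
  destruct (zorn_sets T A0 (FGood Bad)) as [m [Pm [Hm Hmax]]].
  - intros C HC Hch l Hl.
    assert (exists s, (s = A0 \/ C s) /\ forall t, In t l -> s t) as [s [Hs Hst]].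
    { clear -HC Hch Hl. induction l as [|y l IH].
      - exists A0. split; auto. intros _ [].
      - destruct IH as [s [Hs Hst]]. intros; apply Hl; simpl; auto.
        destruct (Hl y (or_introl eq_refl)) as [Hy|[c [Cc Hy]]].
        + exists s. split; auto. intros t [<-|Ht]; auto. destruct Hs as [->|Hs]; auto. apply (proj2 (HC s Hs)); auto.
        + destruct Hs as [->|Hs].
          * exists c. split; auto. intros t [<-|Ht]; auto. apply (proj2 (HC c Cc)); auto.
          * destruct (Hch s c Hs Cc) as [H|H].
            -- exists c. split; auto. intros t [<-|Ht]; auto.
            -- exists s. split; auto. intros t [<-|Ht]; auto. }
    destruct Hs as [->|Hs]. apply H0; auto. apply (proj1 (HC s Hs)); auto.
  - exists m. split; auto. split; auto. intros t Ht. apply (Hmax _ Ht). intros x Hx; auto. auto.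
Qed.


Section PFT.
Variable L : Frame.
Local Notation "a ≤ b" := (fle L a b) (at level 70).
Local Notation "a ⊓ b" := (fmeet L a b) (at level 40, left associativity).
Local Notation "a ⊔ b" := (fjoin L a b) (at level 50, left associativity).
Local Notation "⊤" := (ftop L).
Local Notation "⊥" := (fbot L).
Hint Resolve lr fmeet_lb1 fmeet_lb2 top_max bot_min join_l join_r : core.

Lemma join_sup_list (m c : L) l : m ≤ fsup_list L l -> m ⊔ c ≤ fsup_list L (c :: l).
Proof. intro H. apply join_lub. eapply lt. exact H. apply sup_list_sub. simpl; auto. apply sup_list_ub. simpl; auto. Qed.

Lemma PFT_k (k : L) (B0 : L -> Prop) : fcompact L k ->
  (forall lb, (forall x, In x lb -> B0 x) -> ~ k ≤ fsup_list L lb) ->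
  exists x, prime_filter L x /\ x k /\ (forall b, B0 b -> ~ x b) /\
    (forall S, x (fsup L S) -> exists s, S s /\ x s).
Proof.
  intros Hk H0.
  destruct (zorn_fin L (fun l => k ≤ fsup_list L l) B0) as [B [HB0 [GB MB]]].
  { intros l Hl H. apply (H0 l Hl H). }
  assert (absorb : forall c lc, (forall x, In x lc -> B x) -> c ≤ fsup_list L lc -> B c).
  { intros c lc Hlc Hc. apply MB. intros l Hl Hbad.
    destruct (list_split_join L B c l Hl) as [l' [H1 H2]].
    apply (GB (l' ++ lc)). intros t Ht. apply in_app_or in Ht as [Ht|Ht]; auto.
    eapply lt. exact Hbad. eapply lt. exact H2. apply join_lub.
    apply sup_list_sub. intros; apply in_or_app; auto.
    eapply lt. exact Hc. apply sup_list_sub. intros; apply in_or_app; auto. }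
  assert (notB : forall c, ~ B c -> exists l, (forall x, In x l -> B x) /\ k ≤ fsup_list L l ⊔ c).
  { intros c Hc. apply NNPP. intro H. apply Hc. apply MB. intros l Hl Hbad.
    destruct (list_split_join L B c l Hl) as [l' [H1 H2]]. apply H. exists l'. split; auto. eapply lt; eauto. }
  exists (fun c => ~ B c). split; [|split; [|split]].
  - split; [|split; [|split; [|split]]].
    + intros a b Ha Hab Hb. apply Ha. apply (absorb a [b]). intros x [->|[]]; auto. eapply lt. exact Hab. apply sup_list_ub. simpl; auto.
    + intros a b Ha Hb Hab. destruct (notB a Ha) as [l1 [H1 H1']]. destruct (notB b Hb) as [l2 [H2 H2']].
      apply (GB ((a ⊓ b) :: l1 ++ l2)).
      intros t [<-|Ht]; auto. apply in_app_or in Ht as [Ht|Ht]; auto.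
      eapply lt. apply fmeet_glb. exact H1'. exact H2'.
      eapply lt. apply meet_mono. apply join_mono. apply (sup_list_sub L l1 (l1 ++ l2)). intros; apply in_or_app; auto. apply lr.
      apply join_mono. apply (sup_list_sub L l2 (l1 ++ l2)). intros; apply in_or_app; auto. apply lr.
      eapply lt. apply distr2. apply join_sup_list. auto.
    + intro H. apply (GB [⊤]). intros t [<-|[]]; auto. eapply lt; [apply (top_max L k)|]. apply sup_list_ub; simpl; auto.
    + intro H. apply H. apply (absorb _ []). intros _ []. auto.
    + intros a b Hab. apply NNPP. intro H. apply Hab. apply (absorb _ [a; b]).
      intros x [<-|[<-|[]]]; apply NNPP; intro; apply H; auto.
      apply join_lub; apply sup_list_ub; simpl; auto.
  - intro H. apply (GB [k]). intros t [<-|[]]; auto. apply sup_list_ub; simpl; auto.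
  - intros b Hb H. apply H. auto.
  - intros S HS. apply NNPP. intro H. apply HS. apply MB. intros l Hl Hbad.
    destruct (list_split_join L B (fsup L S) l Hl) as [l' [H1 H2]].
    destruct (Hk (fun c => In c l' \/ S c)) as [l'' [H3 H4]].
    { eapply lt. exact Hbad. eapply lt. exact H2. apply join_lub.
      apply sup_list_least. intros x Hx. apply fsup_ub. auto.
      apply sup_mono. intros a Sa. exists a. auto. }
    apply (GB l''); auto. intros t Ht. destruct (H3 t Ht) as [Ht'|Ht']; auto.
    apply NNPP. intro. apply H. exists t. auto.
Qed.

Variable K : L -> L -> Prop.
Hypothesis K_mono : forall a a' b b', a' ≤ a -> b ≤ b' -> K a b -> K a' b'.
Hypothesis K_split : forall a b c, K (a ⊓ c) b -> K a (b ⊔ c) -> K a b.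
Hypothesis K_refl : forall a b, a ≤ b -> K a b.

Fixpoint lefts (l : list (L + L)) : list L :=
  match l with [] => [] | inl a :: l => a :: lefts l | inr _ :: l => lefts l end.
Fixpoint rights (l : list (L + L)) : list L :=
  match l with [] => [] | inr a :: l => a :: rights l | inl _ :: l => rights l end.

Lemma lefts_in l a : In a (lefts l) -> In (inl a) l.
Proof. induction l as [|[x|x] l IH]; simpl; auto. intros [->|H]; auto. Qed.
Lemma rights_in l a : In a (rights l) -> In (inr a) l.
Proof. induction l as [|[x|x] l IH]; simpl; auto. intros [->|H]; auto. Qed.
Lemma lefts_app la lb : lefts (map inl la ++ map inr lb) = la.
Proof. induction la; simpl; auto. induction lb; simpl; auto. f_equal; auto. Qed.
Lemma rights_app la lb : rights (map inl la ++ map inr lb) = lb.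
Proof. induction la; simpl; auto. induction lb; simpl; auto. f_equal; auto. Qed.

Definition GoodAB (A B : L -> Prop) := forall la lb, (forall x, In x la -> A x) -> (forall x, In x lb -> B x) ->
  ~ K (meet_list L la) (fsup_list L lb).

Definition BadP (l : list (L + L)) := K (meet_list L (lefts l)) (fsup_list L (rights l)).

Lemma good_iff (S : L + L -> Prop) : FGood BadP S <-> GoodAB (fun a => S (inl a)) (fun b => S (inr b)).
Proof.
  split.
  - intros H la lb Ha Hb HK. apply (H (map inl la ++ map inr lb)).
    intros t Ht. apply in_app_or in Ht as [Ht|Ht]; apply in_map_iff in Ht as [x [<- Hx]]; auto.
    unfold BadP. rewrite lefts_app, rights_app. auto.
  - intros H l Hl HK. apply (H (lefts l) (rights l)); auto.
    intros x Hx; apply Hl; apply lefts_in; auto. intros x Hx; apply Hl; apply rights_in; auto.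
Qed.

Lemma goodAB_mono (A B A' B' : L -> Prop) : (forall x, A' x -> A x) -> (forall x, B' x -> B x) -> GoodAB A B -> GoodAB A' B'.
Proof. intros H1 H2 H la lb Ha Hb. apply H; auto. Qed.

Lemma not_goodAB A B : ~ GoodAB A B -> exists la lb, (forall x, In x la -> A x) /\ (forall x, In x lb -> B x) /\ K (meet_list L la) (fsup_list L lb).
Proof. intro H. apply NNPP. intro H'. apply H. intros la lb Ha Hb HK. apply H'. eauto. Qed.

Lemma PFT_pair (A0 B0 : L -> Prop) : GoodAB A0 B0 ->
  exists x, prime_filter L x /\ (forall a, A0 a -> x a) /\ (forall b, B0 b -> ~ x b) /\
    (forall a b, x a -> ~ x b -> ~ K a b).
Proof.
  intro H0.
  destruct (zorn_fin (L + L) BadP (fun t => match t with inl a => A0 a | inr b => B0 b end)) as [S [HS0 [GS MS]]].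
  { apply good_iff. auto. }
  set (A := fun a => S (inl a)). set (B := fun b => S (inr b)).
  assert (GAB : GoodAB A B) by (apply good_iff; auto).
  assert (MA : forall c, GoodAB (fun a => A a \/ a = c) B -> A c).
  { intros c H. apply MS. apply good_iff. eapply goodAB_mono; [| |exact H].
    intros x [Hx|Hx]; [left; auto|right; congruence]. intros x [Hx|Hx]; [auto|discriminate]. }
  assert (MB : forall c, GoodAB A (fun b => B b \/ b = c) -> B c).
  { intros c H. apply MS. apply good_iff. eapply goodAB_mono; [| |exact H].
    intros x [Hx|Hx]; [auto|discriminate]. intros x [Hx|Hx]; [left; auto|right; congruence]. }
  assert (contra : forall la lb, (forall x, In x la -> A x) -> (forall x, In x lb -> B x) -> ~ meet_list L la ≤ fsup_list L lb).
  { intros la lb Ha Hb H. apply (GAB la lb Ha Hb). apply K_refl; auto. }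
  assert (disj : forall c, A c \/ B c).
  { intro c. apply NNPP. intro H. 
    destruct (not_goodAB _ _ (fun G => H (or_introl (MA c G)))) as [la1 [lb1 [Ha1 [Hb1 K1]]]].
    destruct (not_goodAB _ _ (fun G => H (or_intror (MB c G)))) as [la2 [lb2 [Ha2 [Hb2 K2]]]].
    destruct (list_split_meet L A c la1 Ha1) as [la1' [Ha1' E1]].
    destruct (list_split_join L B c lb2 Hb2) as [lb2' [Hb2' E2]].
    apply (GAB (la1' ++ la2) (lb1 ++ lb2')).
    intros x Hx; apply in_app_or in Hx as [Hx|Hx]; auto.
    intros x Hx; apply in_app_or in Hx as [Hx|Hx]; auto.
    apply (K_split _ _ c).
    - eapply K_mono; [| |exact K1].
      + eapply lt; [|exact E1]. apply meet_mono; auto. apply meet_list_spec. intros x Hx. apply meet_list_lb. apply in_or_app; auto.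
      + apply sup_list_sub. intros; apply in_or_app; auto.
    - eapply K_mono; [| |exact K2].
      + apply meet_list_spec. intros x Hx. apply meet_list_lb. apply in_or_app; auto.
      + eapply lt. exact E2. apply join_mono; auto. apply sup_list_sub. intros; apply in_or_app; auto. }
  assert (notboth : forall c, A c -> B c -> False).
  { intros c Ha Hb. apply (contra [c] [c]). intros x [<-|[]]; auto. intros x [<-|[]]; auto.
    eapply lt. apply meet_list_lb. simpl; eauto. apply sup_list_ub. simpl; auto. }
  assert (nA : forall c, ~ A c -> B c) by (intros c H; destruct (disj c); tauto).
  exists A. split; [|split; [|split]].
  - split; [|split; [|split; [|split]]].
    + intros a b Ha Hab. apply NNPP. intro Hb. apply (contra [a] [b]).
      intros x [<-|[]]; auto. intros x [<-|[]]; auto.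
      eapply lt. apply meet_list_lb. simpl; eauto. eapply lt. exact Hab. apply sup_list_ub. simpl; auto.
    + intros a b Ha Hb. apply NNPP. intro H. apply (contra [a; b] [a ⊓ b]).
      intros x [<-|[<-|[]]]; auto. intros x [<-|[]]; auto.
      eapply lt; [|apply sup_list_ub; simpl; auto]. apply fmeet_glb; apply meet_list_lb; simpl; auto.
    + apply NNPP. intro H. apply (contra [] [⊤]). intros _ []. intros x [<-|[]]; auto.
      apply sup_list_ub. simpl; auto.
    + intro H. apply (contra [⊥] []). intros x [<-|[]]; auto. intros _ []. eapply lt. apply meet_list_lb. simpl; eauto. auto.
    + intros a b H. apply NNPP. intro H'. apply (contra [a ⊔ b] [a; b]).
      intros x [<-|[]]; auto. intros x [<-|[<-|[]]]; apply nA; auto.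
      eapply lt. apply meet_list_lb. simpl; eauto. apply join_lub; apply sup_list_ub; simpl; auto.
  - intros a Ha. apply (HS0 (inl a)). auto.
  - intros b Hb Ha. apply (notboth b); auto. apply (HS0 (inr b)). auto.
  - intros a b Ha Hb HK. apply (GAB [a] [b]). intros x [<-|[]]; auto. intros x [<-|[]]; auto.
    eapply K_mono; [| |exact HK]. apply meet_list_lb; simpl; auto. apply sup_list_ub; simpl; auto.
Qed.

End PFT.


Section PF.
Variable L : Frame.
Local Notation "a ≤ b" := (fle L a b) (at level 70).
Local Notation "a ⊓ b" := (fmeet L a b) (at level 40, left associativity).
Local Notation "a ⊔ b" := (fjoin L a b) (at level 50, left associativity).
Local Notation "⊤" := (ftop L).
Local Notation "⊥" := (fbot L).
Hint Resolve lr fmeet_lb1 fmeet_lb2 top_max bot_min join_l join_r : core.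

Variable x : L -> Prop.
Hypothesis Hx : prime_filter L x.
Lemma pf_up a b : x a -> a ≤ b -> x b. Proof. apply Hx. Qed.
Lemma pf_meet a b : x (a ⊓ b) <-> x a /\ x b.
Proof. split. intro H; split; eapply pf_up; eauto. intros [H1 H2]; apply Hx; auto. Qed.
Lemma pf_top : x ⊤. Proof. apply Hx. Qed.
Lemma pf_bot : ~ x ⊥. Proof. apply Hx. Qed.
Lemma pf_join a b : x (a ⊔ b) <-> x a \/ x b.
Proof. split. apply Hx. intros [H|H]; eapply pf_up; eauto. Qed.
Lemma pf_sup_list l : x (fsup_list L l) <-> exists c, In c l /\ x c.
Proof.
  split.
  - induction l as [|c l IH]; intro H.
    + rewrite sup_list_nil in H. exfalso; apply pf_bot; auto.
    + assert (H' : x (c ⊔ fsup_list L l)) by (eapply pf_up; [exact H| apply sup_list_cons]).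
      apply pf_join in H' as [H'|H'].
      exists c; simpl; auto. destruct (IH H') as [d [H1 H2]]. exists d; simpl; auto.
  - intros [c [H1 H2]]. eapply pf_up. exact H2. apply sup_list_ub; auto.
Qed.
Lemma pf_meet_list l : x (meet_list L l) <-> forall c, In c l -> x c.
Proof.
  induction l as [|c l IH]; simpl. split. intros _ _ []. intros _. apply pf_top.
  rewrite pf_meet, IH. split. intros [H1 H2] d [<-|Hd]; auto. intros H; split; auto.
Qed.
End PF.

Section XTop.
Variable L : Frame.
Local Notation "a ≤ b" := (fle L a b) (at level 70).
Local Notation "a ⊓ b" := (fmeet L a b) (at level 40, left associativity).
Local Notation "a ⊔ b" := (fjoin L a b) (at level 50, left associativity).
Local Notation "⊤" := (ftop L).
Local Notation "⊥" := (fbot L).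
Hint Resolve lr fmeet_lb1 fmeet_lb2 top_max bot_min join_l join_r : core.
Hypothesis alg : algebraic_frame L.

Local Notation X := (XL L).
Local Notation Xo := (@XL_open L).
Local Notation Xle := (@XL_le L).
Definition pt (x : X) : L -> Prop := proj1_sig x.
Lemma pfX (x : X) : prime_filter L (pt x). Proof. exact (proj2_sig x). Qed.
Hint Resolve pfX : core.

Lemma X_ext (x y : X) : (forall a, pt x a <-> pt y a) -> x = y.
Proof.
  destruct x as [x Hx], y as [y Hy]. unfold pt; simpl. intro H.
  assert (x = y) by (apply set_ext; auto). subst y. f_equal. apply proof_irrelevance.
Qed.

Definition cprime (x : L -> Prop) := forall S, x (fsup L S) -> exists s, S s /\ x s.

Lemma PFT_le a b : ~ a ≤ b -> exists x : X, pt x a /\ ~ pt x b /\ cprime (pt x).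
Proof.
  intro H. destruct (alg_compact_below L alg a b H) as [k [Hk [Hka Hkb]]].
  destruct (PFT_k L k (fun c => c = b) Hk) as [x [Hx [Hxk [Hxb Hcp]]]].
  { intros lb Hlb Hle. apply Hkb. eapply lt. exact Hle. apply sup_list_least. intros c Hc. rewrite (Hlb c Hc). auto. }
  exists (exist _ x Hx). unfold pt; simpl. split; [|split]; auto. eapply pf_up; eauto.
Qed.

Lemma phi_sub_le a b : (forall x : X, pt x a -> pt x b) -> a ≤ b.
Proof. intro H. apply NNPP. intro H'. destruct (PFT_le a b H') as [x [H1 [H2 _]]]. auto. Qed.


Definition bas (a b : L) : X -> Prop := fun y => pt y a /\ ~ pt y b.

Lemma sub_list_basic (l : list (X -> Prop)) (x : X) :
  (forall s, In s l -> XL_subbasis s) -> (forall s, In s l -> s x) ->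
  exists a b, pt x a /\ ~ pt x b /\ forall y, pt y a -> ~ pt y b -> forall s, In s l -> s y.
Proof.
  induction l as [|s l IH]; intros H1 H2.
  - exists ⊤, ⊥. split. apply pf_top; auto. split. apply pf_bot; auto. intros _ _ _ _ [].
  - destruct IH as [a [b [Ha [Hb Hy]]]]. intros; apply H1; simpl; auto. intros; apply H2; simpl; auto.
    destruct (H1 s (or_introl eq_refl)) as [c [-> | ->]].
    + exists (a ⊓ c), b. assert (phi c x) by (apply H2; simpl; auto).
      split. apply pf_meet; auto. split; auto. intros y Hya Hyb t [<-|Ht].
      apply pf_meet in Hya; [exact (proj2 Hya)|auto]. apply Hy; auto. eapply pf_up; eauto.
    + exists a, (b ⊔ c). assert (setC (phi c) x) by (apply H2; simpl; auto).
      split; auto. split. intro Hj. apply pf_join in Hj; auto. destruct Hj as [Hj|Hj]; [apply Hb|apply H]; exact Hj.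
      intros y Hya Hyb t [<-|Ht].
      intro. apply Hyb. apply pf_join; auto. apply Hy; auto. intro. apply Hyb. apply pf_join; auto.
Qed.

Lemma open_char (U : X -> Prop) : Xo U <-> forall x, U x -> exists a b, pt x a /\ ~ pt x b /\ forall y, pt y a -> ~ pt y b -> U y.
Proof.
  split.
  - intros H x Hx. destruct (H x Hx) as [l [H1 [H2 H3]]].
    destruct (sub_list_basic l x H1 H2) as [a [b [Ha [Hb Hy]]]]. exists a, b. split; [|split]; auto.
    intros y H4 H5. apply H3. apply Hy; auto.
  - intros H x Hx. destruct (H x Hx) as [a [b [Ha [Hb Hy]]]].
    exists [phi a; setC (phi b)]. split; [|split].
    + intros s [<-|[<-|[]]]. exists a; left; reflexivity. exists b; right; reflexivity.
    + intros s [<-|[<-|[]]]; auto.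
    + intros y Hs. apply Hy. apply (Hs (phi a)); simpl; auto. apply (Hs (setC (phi b))); simpl; auto.
Qed.

Lemma bas_open a b : Xo (bas a b).
Proof. apply open_char. intros x [H1 H2]. exists a, b. split; auto. split; auto. intros; split; auto. Qed.
Lemma phi_open a : Xo (phi a).
Proof. apply open_char. intros x H. exists a, ⊥. split; auto. split. apply pf_bot; auto. auto. Qed.
Lemma nphi_open a : Xo (setC (phi a)).
Proof. apply open_char. intros x H. exists ⊤, a. split. apply pf_top; auto. split; auto. Qed.
Lemma setCC {T} (A : T -> Prop) : setC (setC A) = A.
Proof. apply set_ext. intro. unfold setC. split; [apply NNPP|tauto]. Qed.
Lemma phi_clopen a : clopen Xo (phi a).
Proof. split. apply phi_open. apply nphi_open. Qed.
Lemma nphi_clopen a : clopen Xo (setC (phi a)).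
Proof. split. apply nphi_open. unfold closed. rewrite setCC. apply phi_open. Qed.
Lemma bas_clopen a b : clopen Xo (bas a b).
Proof. split. apply bas_open. apply open_char. intros x Hx. unfold setC, bas in Hx.
  destruct (classic (pt x a)) as [Ha|Ha].
  - assert (pt x b) by (apply NNPP; intro; apply Hx; auto).
    exists b, ⊥. split; auto. split. apply pf_bot; auto. intros y Hy _ [_ Hy']. auto.
  - exists ⊤, a. split. apply pf_top; auto. split; auto. intros y _ Hy [Hy' _]. auto.
Qed.

Lemma pfX_join (x : X) a b : pt x (a ⊔ b) <-> pt x a \/ pt x b.
Proof. apply pf_join; auto. Qed.
Lemma pfX_up (x : X) a b : pt x a -> a ≤ b -> pt x b.
Proof. apply pf_up; auto. Qed.
Lemma pfX_meet (x : X) a b : pt x (a ⊓ b) <-> pt x a /\ pt x b.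
Proof. apply pf_meet; auto. Qed.

Lemma X_top : is_topology Xo.
Proof.
  split; [|split; [|split]].
  - apply open_char. intros x _. exists ⊤, ⊥. split. apply pf_top; auto. split. apply pf_bot; auto. auto.
  - intros U V HU HV. rewrite open_char in *. intros x [Ux Vx].
    destruct (HU x Ux) as [a1 [b1 [A1 [B1 H1]]]]. destruct (HV x Vx) as [a2 [b2 [A2 [B2 H2]]]].
    exists (a1 ⊓ a2), (b1 ⊔ b2). split. apply pfX_meet; auto. split. rewrite pfX_join; tauto.
    intros y Ha Hb. apply pfX_meet in Ha; auto. rewrite pfX_join in Hb; auto. split; [apply H1|apply H2]; tauto.
  - intros F HF. apply open_char. intros x [U [FU Ux]]. assert (HU := HF U FU). rewrite open_char in HU.
    destruct (HU x Ux) as [a [b [A [B H]]]]. exists a, b. split; auto. split; auto. intros y Ha Hb. exists U. auto.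
  - intros U V HUV HU. rewrite open_char in *. intros x Vx. destruct (HU x (proj2 (HUV x) Vx)) as [a [b [A [B H]]]].
    exists a, b. split; auto. split; auto. intros y Ha Hb. apply HUV. auto.
Qed.

Lemma closed_compact (C : X -> Prop) : closed Xo C -> compact_set Xo C.
Proof.
  intros HC F HF Hcov. apply NNPP; intro Hn.
  set (Kc := fun a b => exists l : list (X -> Prop), (forall U, In U l -> F U) /\
      forall y, C y -> pt y a -> ~ pt y b -> exists U, In U l /\ U y).
  destruct (PFT_pair L Kc) with (A0 := fun a => a = ⊤) (B0 := fun b => b = ⊥) as [P [HP [_ [_ HK]]]].
  - intros a a' b b' H1 H2 [l [Hl Hy]]. exists l. split; auto. intros y Cy Ha Hb. apply Hy; auto.
    eapply pfX_up; eauto. intro. apply Hb. eapply pfX_up; eauto.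
  - intros a b c [l1 [Hl1 Hy1]] [l2 [Hl2 Hy2]]. exists (l1 ++ l2). split.
    intros U HU. apply in_app_or in HU as [HU|HU]; auto.
    intros y Cy Ha Hb. destruct (classic (pt y c)) as [Hc|Hc].
    + destruct (Hy1 y Cy) as [U [H1 H2]]. apply pfX_meet; auto. auto. exists U. split; auto. apply in_or_app; auto.
    + destruct (Hy2 y Cy) as [U [H1 H2]]. auto. rewrite pfX_join; auto. tauto. exists U. split; auto. apply in_or_app; auto.
  - intros a b Hab. exists []. split. intros _ []. intros y _ Ha Hb. exfalso. apply Hb. eapply pfX_up; eauto.
  - intros la lb Ha Hb [l [Hl Hy]]. apply Hn. exists l. split; auto. intros y Cy. apply Hy; auto.
    apply pf_meet_list; auto. intros c Hc. rewrite (Ha c Hc). apply pf_top; auto.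
    intro H. apply pf_sup_list in H as [c [H1 H2]]; auto. rewrite (Hb c H1) in H2. apply (pf_bot L (pt y)); auto.
  - set (x := exist _ P HP : X).
    destruct (classic (C x)) as [Cx|Cx].
    + destruct (Hcov x Cx) as [U [FU Ux]]. assert (HU := HF U FU). rewrite open_char in HU.
      destruct (HU x Ux) as [a [b [A [B H]]]]. apply (HK a b A B). exists [U]. split. intros V [<-|[]]; auto.
      intros y _ Ha Hb. exists U. split; simpl; auto.
    + unfold closed in HC. rewrite open_char in HC. destruct (HC x Cx) as [a [b [A [B H]]]].
      apply (HK a b A B). exists []. split. intros _ []. intros y Cy Ha Hb. exfalso. apply (H y Ha Hb Cy).
Qed.

Lemma X_compact : compact_space Xo.
Proof. apply closed_compact. apply open_char. intros x H. exfalso. apply H. exact I. Qed.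

Lemma open_upset_phi (W : X -> Prop) : Xo W -> upset Xle W -> forall x, W x -> exists a, pt x a /\ forall y, pt y a -> W y.
Proof.
  intros HW HU x Wx.
  assert (Hcpt : compact_set Xo (setC W)) by (apply closed_compact; unfold closed; rewrite setCC; auto).
  destruct (Hcpt (fun V => exists c, pt x c /\ V = setC (phi c))) as [lV [H1 H2]].
  - intros V [c [_ ->]]. apply nphi_open.
  - intros y Hy. assert (~ Xle x y) by (intro H; apply Hy; eapply HU; eauto).
    assert (exists c, pt x c /\ ~ pt y c) as [c [Hc1 Hc2]].
    { apply NNPP. intro H'. apply H. intros c Hc. apply NNPP. intro. apply H'. eauto. }
    exists (setC (phi c)). split; eauto.
  - assert (exists a, pt x a /\ forall y, pt y a -> forall V, In V lV -> ~ V y) as [a [Ha Hay]].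
    { clear H2. induction lV as [|V lV IH].
      - exists ⊤. split. apply pf_top; auto. intros _ _ _ [].
      - destruct IH as [a [Ha Hay]]. intros; apply H1; simpl; auto.
        destruct (H1 V (or_introl eq_refl)) as [c [Hc ->]].
        exists (a ⊓ c). split. apply pfX_meet; auto. intros y Hy U [<-|HU'].
        + apply pfX_meet in Hy; auto. intro H. apply H. exact (proj2 Hy).
        + apply Hay; auto. eapply pfX_up; eauto. }
    exists a. split; auto. intros y Hy. apply NNPP. intro Hn. destruct (H2 y Hn) as [V [HV Vy]].
    apply (Hay y Hy V HV Vy).
Qed.

Lemma clopen_upset_phi (U : X -> Prop) : clopen_upset Xo Xle U -> exists a, U = phi a.
Proof.
  intros [[HUo HUc] HUu].
  destruct (closed_compact U HUc (fun V => exists a, V = phi a /\ forall y, pt y a -> U y)) as [lV [H1 H2]].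
  - intros V [a [-> _]]. apply phi_open.
  - intros x Ux. destruct (open_upset_phi U HUo HUu x Ux) as [a [Ha Hy]]. exists (phi a). split; eauto.
  - assert (exists b, (forall y, pt y b -> U y) /\ forall y, (exists V, In V lV /\ V y) -> pt y b) as [b [Hb1 Hb2]].
    { clear H2. induction lV as [|V lV IH].
      - exists ⊥. split. intros y Hy. exfalso. apply (pf_bot L (pt y)); auto. intros y [V [[] _]].
      - destruct IH as [b [Hb1 Hb2]]. intros; apply H1; simpl; auto.
        destruct (H1 V (or_introl eq_refl)) as [a [-> Ha]].
        exists (b ⊔ a). split.
        + intros y Hy. apply pfX_join in Hy as [Hy|Hy]; auto.
        + intros y [W [[<-|HW] Wy]]; apply pfX_join; [right; exact Wy| left; apply Hb2; eauto]. }
    exists b. apply set_ext. intro y. split. intro Uy. apply Hb2. apply H2. auto. apply Hb1.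
Qed.

Lemma cover_phi_fin (a : L) (S : L -> Prop) : (forall y, pt y a -> exists s, S s /\ pt y s) ->
  exists l, (forall c, In c l -> S c) /\ a ≤ fsup_list L l.
Proof.
  intro Hcov.
  destruct (closed_compact (phi a) (nphi_open a) (fun V => exists s, S s /\ V = phi s)) as [lV [H1 H2]].
  - intros V [s [_ ->]]. apply phi_open.
  - intros y Hy. destruct (Hcov y Hy) as [s [Ss Hs]]. exists (phi s). split; eauto.
  - assert (exists l, (forall c, In c l -> S c) /\ forall y, (exists V, In V lV /\ V y) -> exists c, In c l /\ pt y c) as [l [Hl1 Hl2]].
    { clear H2. induction lV as [|V lV IH].
      - exists []. split. intros _ []. intros y [V [[] _]].
      - destruct IH as [l [Hl1 Hl2]]. intros; apply H1; simpl; auto.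
        destruct (H1 V (or_introl eq_refl)) as [s [Ss ->]].
        exists (s :: l). split. intros c [<-|Hc]; auto.
        intros y [W [[<-|HW] Wy]]. exists s. simpl; auto. destruct (Hl2 y) as [c [Hc1 Hc2]]. eauto. exists c; simpl; auto. }
    exists l. split; auto. apply phi_sub_le. intros y Hy. apply pf_sup_list; auto.
Qed.

Lemma closure_sup (S : L -> Prop) (x : X) :
  closure Xo (fun y => exists s, S s /\ pt y s) x <-> pt x (fsup L S).
Proof.
  split.
  - intro H. apply NNPP. intro Hn. destruct (H (setC (phi (fsup L S))) (nphi_open _) Hn) as [y [Hy [s [Ss Hs]]]].
    apply Hy. eapply pfX_up; eauto. apply fsup_ub; auto.
  - intros Hx U HU Ux. rewrite open_char in HU. destruct (HU x Ux) as [a [b [Ha [Hb Hy]]]].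
    assert (H1 : ~ a ⊓ fsup L S ≤ b) by (intro H; apply Hb; eapply pfX_up; [apply pfX_meet; split; [exact Ha|exact Hx]|exact H]).
    assert (exists s, S s /\ ~ a ⊓ s ≤ b) as [s [Ss Hs]].
    { apply NNPP. intro H. apply H1. eapply lt. apply distr_sup. apply fsup_least. intros c [s [Ss ->]].
      apply NNPP. intro. apply H. eauto. }
    destruct (PFT_le _ _ Hs) as [y [Hy1 [Hy2 _]]]. apply pfX_meet in Hy1; auto.
    exists y. split. apply Hy; tauto. exists s. split; tauto.
Qed.


Lemma phi_upset a : upset Xle (phi a).
Proof. intros x y Hx Hxy. apply Hxy. exact Hx. Qed.
Lemma phi_clopen_upset a : clopen_upset Xo Xle (phi a).
Proof. split. apply phi_clopen. apply phi_upset. Qed.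

Lemma le_split (a b c : L) : a ⊓ c ≤ b -> a ≤ b ⊔ c -> a ≤ b.
Proof.
  intros H1 H2. eapply lt. apply (fmeet_glb L a (b ⊔ c) a); auto. eapply lt. apply distr.
  apply join_lub; auto.
Qed.

Lemma down_bas a b z : downset_of Xle (bas a b) z <-> ~ pt z (imp L a b).
Proof.
  split.
  - intros [x [[Ha Hb] Hzx]] Hi. apply Hb. apply Hzx in Hi. eapply pfX_up.
    apply pfX_meet. split. exact Hi. exact Ha. apply imp_spec. auto.
  - intro Hi.
    destruct (PFT_pair L (fun p q => p ≤ q)) with (A0 := fun c => pt z c \/ c = a) (B0 := fun c => c = b)
      as [P [HP [HA [HB _]]]].
    + intros p p' q q' H1 H2 H3. eapply lt; [exact H1|]. eapply lt; eauto.
    + intros p q c. apply le_split.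
    + auto.
    + intros la lb Ha Hb H. destruct (list_split_meet L (pt z) a la Ha) as [la' [H1 H2]].
      apply Hi. eapply pfX_up. apply (pf_meet_list L (pt z) (pfX z) la'). exact H1.
      apply imp_spec. eapply lt. exact H2. eapply lt. exact H. apply sup_list_least. intros c Hc. rewrite (Hb c Hc). auto.
    + exists (exist _ P HP). split. split. apply HA; auto. apply HB; auto.
      intros c Hc. apply HA. auto.
Qed.

Lemma X_Lspace : L_space Xo Xle.
Proof.
  split; [|split].
  - split; [|split].
    + split; [|split; [|split]].
      * apply X_top.
      * apply X_compact.
      * intros x y Hxy.
        assert (exists c, ~ (pt x c <-> pt y c)) as [c Hc].
        { apply NNPP. intro H. apply Hxy. apply X_ext. intro c. apply NNPP. intro. apply H. eauto. }
        destruct (classic (pt x c)) as [Hx|Hx].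
        -- exists (phi c), (setC (phi c)). split. apply phi_open. split. apply nphi_open. split. exact Hx.
           split. intro Hy. apply Hc. split; auto. intros z [H1 H2]. auto.
        -- exists (setC (phi c)), (phi c). split. apply nphi_open. split. apply phi_open. split. exact Hx.
           split. apply NNPP. intro Hy. apply Hc. split; intro; contradiction. intros z [H1 H2]. auto.
      * intros U x HU Ux. rewrite open_char in HU. destruct (HU x Ux) as [a [b [Ha [Hb Hy]]]].
        exists (bas a b). split. apply bas_clopen. split. split; auto. intros y [H1 H2]. auto.
    + split; [|split].
      * intros x a H; auto.
      * intros x y z H1 H2 a H. apply H2. apply H1. exact H.
      * intros x y H1 H2. apply X_ext. intro a; split; [apply H1|apply H2].
    + intros x y Hxy. assert (exists c, pt x c /\ ~ pt y c) as [c [H1 H2]].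
      { apply NNPP. intro H. apply Hxy. intros c Hc. apply NNPP. intro. apply H. eauto. }
      exists (phi c). split. apply phi_clopen_upset. auto.
  - intros U [HUo HUc].
    destruct (closed_compact U HUc (fun V => exists p : L * L, V = bas (fst p) (snd p) /\ forall y, bas (fst p) (snd p) y -> U y)) as [lV [H1 H2]].
    + intros V [p [-> _]]. apply bas_open.
    + intros x Ux. rewrite open_char in HUo. destruct (HUo x Ux) as [a [b [Ha [Hb Hy]]]].
      exists (bas a b). split. exists (a, b). split; auto. intros y [H3 H4]; auto. split; auto.
    + assert (exists lp : list (L * L), (forall p, In p lp -> forall y, bas (fst p) (snd p) y -> U y) /\
          forall y, U y -> exists p, In p lp /\ bas (fst p) (snd p) y) as [lp [Hp1 Hp2]].
      { assert (exists lp : list (L * L), (forall p, In p lp -> forall y, bas (fst p) (snd p) y -> U y) /\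
          forall y, (exists V, In V lV /\ V y) -> exists p, In p lp /\ bas (fst p) (snd p) y) as [lp [Hp1 Hp2]].
        { clear H2. induction lV as [|V lV IH].
          - exists []. split. intros _ []. intros y [V [[] _]].
          - destruct IH as [lp [Hp1 Hp2]]. intros; apply H1; simpl; auto.
            destruct (H1 V (or_introl eq_refl)) as [p [-> Hp]].
            exists (p :: lp). split. intros q [<-|Hq]. exact Hp. apply Hp1; exact Hq.
            intros y [W [[<-|HW] Wy]]. exists p. simpl; auto. destruct (Hp2 y) as [q [Hq1 Hq2]]. eauto. exists q. simpl; auto. }
        exists lp. split; auto. }
      set (m := meet_list L (map (fun p => imp L (fst p) (snd p)) lp)).
      replace (downset_of Xle U) with (setC (phi m)). apply nphi_clopen.
      apply set_ext. intro z. split.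
      * intro Hz. assert (exists c, In c (map (fun p => imp L (fst p) (snd p)) lp) /\ ~ pt z c) as [c [Hc1 Hc2]].
        { apply NNPP. intro H. apply Hz. apply (pf_meet_list L (pt z) (pfX z)). intros c Hc. apply NNPP. intro. apply H. eauto. }
        apply in_map_iff in Hc1 as [p [<- Hp]]. apply down_bas in Hc2 as [x [Hx Hzx]]. exists x. split; auto. apply (Hp1 p); auto.
      * intros [x [Ux Hzx]] Hm. destruct (Hp2 x Ux) as [p [Hp Hbp]].
        assert (Hd : downset_of Xle (bas (fst p) (snd p)) z) by (exists x; auto).
        apply down_bas in Hd. apply Hd. apply (pf_meet_list L (pt z) (pfX z)) with (l := map (fun p => imp L (fst p) (snd p)) lp); auto.
        apply in_map_iff. eauto.
  - intros W HWo HWu.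
    set (S := fun a => forall y, pt y a -> W y).
    replace W with (fun z => exists s, S s /\ pt z s).
    + replace (closure Xo (fun z => exists s, S s /\ pt z s)) with (phi (fsup L S)). apply phi_open.
      apply set_ext. intro z. rewrite closure_sup. reflexivity.
    + apply set_ext. intro z. split. intros [s [Ss Hs]]. apply Ss; auto.
      intro Wz. destruct (open_upset_phi W HWo HWu z Wz) as [a [Ha Hay]]. exists a. auto.
Qed.

Lemma open_upset_rep (W : X -> Prop) : Xo W -> upset Xle W ->
  W = (fun z => exists s, (forall y, pt y s -> W y) /\ pt z s).
Proof.
  intros HWo HWu. apply set_ext. intro z. split.
  intro Wz. destruct (open_upset_phi W HWo HWu z Wz) as [a [Ha Hay]]. exists a. auto.
  intros [s [Ss Hs]]. apply Ss; auto.
Qed.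

Lemma sp_wb_iff u v : sp_way_below Xo Xle (phi v) (phi u) <-> way_below L v u.
Proof.
  split.
  - intros H S Hu. set (W := fun z => exists s, S s /\ pt z s).
    assert (HW : forall y, phi v y -> W y).
    { apply H.
      - apply open_char. intros x [s [Ss Hs]]. exists s, ⊥. split; auto. split. apply pf_bot; auto.
        intros y Hy _. exists s; auto.
      - intros x y [s [Ss Hs]] Hxy. exists s. split; auto. apply Hxy; auto.
      - intros y Hy. apply closure_sup. eapply pfX_up; eauto. }
    apply (cover_phi_fin v S HW).
  - intros Hvu W HWo HWu Hsub y Hy.
    assert (E := open_upset_rep W HWo HWu).
    assert (Hu : u ≤ fsup L (fun a => forall z, pt z a -> W z)).
    { apply phi_sub_le. intros z Hz. apply closure_sup. rewrite <- E. apply Hsub. exact Hz. }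
    destruct (Hvu _ Hu) as [l [Hl Hvl]].
    assert (pt y (fsup_list L l)) by (eapply pfX_up; eauto).
    apply pf_sup_list in H as [c [Hc1 Hc2]]; auto. apply (Hl c Hc1). auto.
Qed.

Lemma ker_phi u y : ker Xo Xle (phi u) y <-> exists v, way_below L v u /\ pt y v.
Proof.
  split.
  - intros [V [HV [Hwb Vy]]]. destruct (clopen_upset_phi V HV) as [v ->]. exists v. split; auto. apply sp_wb_iff; auto.
  - intros [v [Hv Hy]]. exists (phi v). split. apply phi_clopen_upset. split; auto. apply sp_wb_iff; auto.
Qed.

Lemma cp_spatial (x : X) : cprime (pt x) -> spatial_pt Xo Xle x.
Proof.
  intro Hcp. set (c := fsup L (fun b => ~ pt x b)).
  assert (Hc : ~ pt x c). { intro H. destruct (Hcp _ H) as [s [H1 H2]]. auto. }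
  unfold spatial_pt. replace (fun z => Xle z x) with (setC (phi c)). apply nphi_clopen.
  apply set_ext. intro z. split.
  - intros Hz a Ha. apply NNPP. intro Hxa. apply Hz. eapply pfX_up. exact Ha. apply fsup_ub. auto.
  - intros Hzx Hzc. apply Hc. apply Hzx. auto.
Qed.

Lemma spatial_cp (x : X) : spatial_pt Xo Xle x -> cprime (pt x).
Proof.
  intros [Ho Hc] S HS. apply NNPP. intro Hn.
  assert (HU : clopen_upset Xo Xle (setC (fun z => Xle z x))).
  { split. split; auto. unfold closed. rewrite setCC. auto.
    intros z w Hz Hzw Hw. apply Hz. intros a Ha. apply Hw. apply Hzw. auto. }
  destruct (clopen_upset_phi _ HU) as [c Hcq].
  assert (Hxc : ~ pt x c). { intro H. change (phi c x) in H. rewrite <- Hcq in H. apply H. intros a; auto. }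
  apply Hxc. eapply pfX_up. exact HS. apply fsup_least. intros s Ss. apply phi_sub_le. intros z Hz.
  change (phi c z). rewrite <- Hcq. intro Hzx. apply Hn. exists s. split; auto. apply Hzx; exact Hz.
Qed.

Lemma minimal_cp (k : L) (x : X) : fcompact L k -> minimal_in Xle (phi k) x -> cprime (pt x).
Proof.
  intros Hk [Hxk Hmin] S HS. apply NNPP. intro Hn.
  destruct (PFT_k L k (fun c => ~ pt x c \/ c = fsup L S) Hk) as [P [HP [HPk [HPB _]]]].
  - intros lb Hlb Hle. destruct (list_split_join L (fun c => ~ pt x c) (fsup L S) lb Hlb) as [l' [H1 H2]].
    destruct (Hk (fun c => c = fsup_list L l' \/ S c)) as [l'' [H3 H4]].
    { eapply lt. exact Hle. eapply lt. exact H2. apply join_lub. apply fsup_ub; auto.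
      apply sup_mono. intros a Sa. exists a; auto. }
    assert (pt x (fsup_list L l'')) by (eapply pfX_up; [exact Hxk|exact H4]).
    apply pf_sup_list in H as [c [Hc1 Hc2]]; auto. destruct (H3 c Hc1) as [->|Sc].
    + apply pf_sup_list in Hc2 as [d [Hd1 Hd2]]; auto. apply (H1 d Hd1); auto.
    + apply Hn. eauto.
  - set (z := exist _ P HP : X).
    assert (Hzx : Xle z x). { intros a Ha. apply NNPP. intro. apply (HPB a); auto. }
    assert (z = x) by (apply Hmin; auto).
    apply (HPB (fsup L S)); auto. change (pt z (fsup L S)). rewrite H. auto.
Qed.

Lemma phi_compact_scott k : fcompact L k -> clopen_scott_upset Xo Xle (phi k).
Proof.
  intro Hk. split. apply phi_clopen. split. apply phi_clopen. split. apply phi_upset.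
  intros x Hx. apply cp_spatial. eapply minimal_cp; eauto.
Qed.

Lemma X_density U : clopen_upset Xo Xle U -> sub U (closure Xo (core Xo Xle U)).
Proof.
  intros HU. destruct (clopen_upset_phi U HU) as [u ->]. intros x Hx.
  assert (H : closure Xo (fun y => exists s, (fcompact L s /\ s ≤ u) /\ pt y s) x).
  { apply closure_sup. rewrite <- (alg u). exact Hx. }
  intros V HV Vx. destruct (H V HV Vx) as [y [Vy [s [[Hs1 Hs2] Hys]]]].
  exists y. split; auto. exists (phi s). split. apply phi_compact_scott; auto. split; auto.
  intros z Hz. eapply pfX_up; eauto.
Qed.

Definition stable := forall a b c : L, way_below L a b -> way_below L a c -> way_below L a (b ⊓ c).

Lemma setI_phi u v : setI (phi u) (phi v) = phi (u ⊓ v).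
Proof. apply set_ext. intro y. unfold setI. symmetry. apply pfX_meet. Qed.
Lemma True_phi : (fun _ : X => True) = phi ⊤.
Proof. apply set_ext. intro y. split. intros _. exact (pf_top L (pt y) (pfX y)). intros; exact I. Qed.

Lemma C2_iff : coherent_L_space Xo Xle <-> stable /\ fcompact L ⊤.
Proof.
  split.
  - intros [_ [_ [Hker Htop]]]. split.
    + intros a b c Hb Hc.
      assert (Hcov : forall y, pt y a -> exists s, way_below L s (b ⊓ c) /\ pt y s).
      { intros y Hy. apply ker_phi. rewrite <- setI_phi. apply Hker; try apply phi_clopen_upset.
        split; apply ker_phi; eauto. }
      destruct (cover_phi_fin a _ Hcov) as [l [Hl Hal]].
      eapply wb_left. exact Hal. apply wb_list. auto.
    + assert (Hcov : forall y, pt y ⊤ -> exists s, way_below L s ⊤ /\ pt y s).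
      { intros y _. apply ker_phi. rewrite <- True_phi. apply Htop. }
      destruct (cover_phi_fin _ _ Hcov) as [l [Hl Hal]].
      unfold fcompact. eapply wb_left. exact Hal. apply wb_list. auto.
  - intros [Hst Htop]. split; [|split; [|split]].
    + apply X_Lspace.
    + apply X_density.
    + intros U V HU HV. destruct (clopen_upset_phi U HU) as [u ->]. destruct (clopen_upset_phi V HV) as [v ->].
      rewrite setI_phi. intro y. unfold setI. rewrite !ker_phi. split.
      * intros [w [Hw Hy]]. split; exists w; split; auto; eapply wb_right; eauto.
      * intros [[a [Ha Hya]] [b [Hb Hyb]]]. exists (a ⊓ b). split. apply Hst.
        eapply wb_left; [|exact Ha]. auto. eapply wb_left; [|exact Hb]. auto. apply pfX_meet; auto.
    + intro x. rewrite True_phi. apply ker_phi. exists ⊤. split; auto. exact (pf_top L (pt x) (pfX x)).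
Qed.


Local Notation Y := (YL L).
Local Notation Yo := (@YL_open L).
Definition ypt (y : Y) : L -> Prop := pt (proj1_sig y).
Definition phiY (a : L) : Y -> Prop := fun y => ypt y a.
Lemma pfY (y : Y) : prime_filter L (ypt y). Proof. apply pfX. Qed.
Lemma ycp (y : Y) : cprime (ypt y). Proof. apply spatial_cp. exact (proj2_sig y). Qed.
Lemma pfY_up (y : Y) a b : ypt y a -> a ≤ b -> ypt y b. Proof. apply pf_up; apply pfY. Qed.

Lemma Y_ext (y y' : Y) : (forall a, ypt y a <-> ypt y' a) -> y = y'.
Proof.
  destruct y as [y Hy], y' as [y' Hy']. unfold ypt; simpl. intro H.
  assert (y = y') by (apply X_ext; auto). subst y'. f_equal. apply proof_irrelevance.
Qed.

Lemma Yopen_eq (V : Y -> Prop) : Yo V -> exists a, V = phiY a.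
Proof.
  intros [U [HU HV]]. destruct (clopen_upset_phi U HU) as [a ->]. exists a. apply set_ext. intro y. apply HV.
Qed.
Lemma phiY_open a : Yo (phiY a).
Proof. exists (phi a). split. apply phi_clopen_upset. intro y. reflexivity. Qed.

Lemma PFT_Y a b : ~ a ≤ b -> exists y : Y, ypt y a /\ ~ ypt y b.
Proof.
  intro H. destruct (PFT_le a b H) as [x [H1 [H2 H3]]].
  exists (exist _ x (cp_spatial x H3)). unfold ypt; simpl. auto.
Qed.
Lemma phiY_le a b : (forall y, ypt y a -> ypt y b) -> a ≤ b.
Proof. intro H. apply NNPP. intro H'. destruct (PFT_Y a b H') as [y [H1 H2]]. auto. Qed.

Lemma Y_top : is_topology Yo.
Proof.
  split; [|split; [|split]].
  - replace (fun _ : Y => True) with (phiY ⊤). apply phiY_open.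
    apply set_ext. intro y. split; auto. intros _. apply (pf_top L _ (pfY y)).
  - intros U V HU HV. destruct (Yopen_eq U HU) as [a ->]. destruct (Yopen_eq V HV) as [b ->].
    replace (setI (phiY a) (phiY b)) with (phiY (a ⊓ b)). apply phiY_open.
    apply set_ext. intro y. unfold setI, phiY. apply (pf_meet L _ (pfY y)).
  - intros F HF. set (S := fun c => exists U, F U /\ U = phiY c).
    replace (fun x => exists U, F U /\ U x) with (phiY (fsup L S)). apply phiY_open.
    apply set_ext. intro y. split.
    + intro Hy. destruct (ycp y S Hy) as [s [[U [FU ->]] Hs]]. exists (phiY s). auto.
    + intros [U [FU Uy]]. destruct (Yopen_eq U (HF U FU)) as [c ->]. eapply pfY_up. exact Uy.
      apply fsup_ub. exists (phiY c). auto.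
  - intros U V HUV HU. destruct (Yopen_eq U HU) as [a ->]. replace V with (phiY a). apply phiY_open.
    apply set_ext. auto.
Qed.

Lemma compact_phiY a : compact_set Yo (phiY a) <-> fcompact L a.
Proof.
  split.
  - intros H S Hle.
    destruct (H (fun U => exists s, S s /\ U = phiY s)) as [lU [H1 H2]].
    + intros U [s [_ ->]]. apply phiY_open.
    + intros y Hy. assert (ypt y (fsup L S)) by (eapply pfY_up; eauto).
      destruct (ycp y S H0) as [s [Ss Hs]]. exists (phiY s). eauto.
    + assert (exists l, (forall c, In c l -> S c) /\ forall y, (exists U, In U lU /\ U y) -> exists c, In c l /\ ypt y c) as [l [Hl1 Hl2]].
      { clear H2. induction lU as [|U lU IH].
        - exists []. split. intros _ []. intros y [U [[] _]].
        - destruct IH as [l [Hl1 Hl2]]. intros; apply H1; simpl; auto.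
          destruct (H1 U (or_introl eq_refl)) as [s [Ss ->]].
          exists (s :: l). split. intros c [<-|Hc]; auto.
          intros y [W [[<-|HW] Wy]]. exists s. simpl; auto. destruct (Hl2 y) as [c [Hc1 Hc2]]. eauto. exists c; simpl; auto. }
      exists l. split; auto. apply phiY_le. intros y Hy. apply (pf_sup_list L _ (pfY y)). apply Hl2. apply H2. exact Hy.
  - intros Ha F HF Hcov.
    set (S := fun c => exists U, F U /\ U = phiY c).
    assert (Hle : a ≤ fsup L S).
    { apply phiY_le. intros y Hy. destruct (Hcov y Hy) as [U [FU Uy]]. destruct (Yopen_eq U (HF U FU)) as [c ->].
      eapply pfY_up. exact Uy. apply fsup_ub. exists (phiY c). auto. }
    destruct (Ha S Hle) as [l [Hl Hal]].
    assert (exists lU, (forall U, In U lU -> F U) /\ forall y, (exists c, In c l /\ ypt y c) -> exists U, In U lU /\ U y) as [lU [H1 H2]].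
    { clear Hal. induction l as [|c l IH].
      - exists []. split. intros _ []. intros y [c [[] _]].
      - destruct IH as [lU [H1 H2]]. intros; apply Hl; simpl; auto.
        destruct (Hl c (or_introl eq_refl)) as [U [FU ->]].
        exists (phiY c :: lU). split. intros V [<-|HV]; auto.
        intros y [d [[<-|Hd] Hy]]. exists (phiY c). simpl; auto. destruct (H2 y) as [V [HV1 HV2]]. eauto. exists V; simpl; auto. }
    exists lU. split; auto. intros y Hy. apply H2. apply (pf_sup_list L _ (pfY y)). eapply pfY_up; eauto.
Qed.

Lemma closure_single (x' z : Y) : closure Yo (fun w => w = x') z <-> forall a, ypt z a -> ypt x' a.
Proof.
  split.
  - intros H a Ha. destruct (H (phiY a) (phiY_open a) Ha) as [w [Hw ->]]. exact Hw.
  - intros H U HU Uz. destruct (Yopen_eq U HU) as [a ->]. exists x'. split; auto. apply H. exact Uz.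
Qed.

Lemma Y_sober : sober Yo.
Proof.
  intros C [HCc [[y0 Cy0] Hirr]].
  destruct (Yopen_eq _ HCc) as [c Hc].
  assert (HC : forall y, C y <-> ~ ypt y c).
  { intro y. change (~ ypt y c) with (~ phiY c y). rewrite <- Hc. unfold setC. split; [tauto|apply NNPP]. }
  set (P := fun a => ~ a ≤ c).
  assert (HP : prime_filter L P).
  { split; [|split; [|split; [|split]]].
    - intros a b Ha Hab Hb. apply Ha. eapply lt; eauto.
    - intros a b Ha Hb Hab.
      assert (Hcl : forall d, closed Yo (setC (phiY d))) by (intro d; unfold closed; rewrite setCC; apply phiY_open).
      destruct (Hirr (setC (phiY a)) (setC (phiY b)) (Hcl a) (Hcl b)) as [H|H].
      + intros y Cy. apply HC in Cy. apply NNPP. intro H. apply Cy. eapply pfY_up; [|exact Hab].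
        apply (pf_meet L _ (pfY y)). split; apply NNPP; intro; apply H; [left|right]; auto.
      + apply Ha. apply phiY_le. intros y Hy. apply NNPP. intro Hyc. apply (H y); auto. apply HC; auto.
      + apply Hb. apply phiY_le. intros y Hy. apply NNPP. intro Hyc. apply (H y); auto. apply HC; auto.
    - intro H. apply HC in Cy0. apply Cy0. eapply pfY_up; [|exact H]. apply (pf_top L _ (pfY y0)).
    - intro H. apply H. auto.
    - intros a b H. apply NNPP. intro H'. apply H. apply join_lub; apply NNPP; intro; apply H'; [left|right]; auto. }
  assert (Hcp : cprime P).
  { intros S HS. apply NNPP. intro H. apply HS. apply fsup_least. intros s Ss. apply NNPP. intro. apply H. eauto. }
  set (xP := exist _ P HP : X).
  set (y := exist _ xP (cp_spatial xP Hcp) : Y).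
  assert (Hyd : forall a, ypt y a <-> P a) by (intro; reflexivity).
  assert (Hseq : seteq C (closure Yo (fun z => z = y))).
  { intro z. rewrite closure_single, HC. split.
    - intros Hz a Ha. apply Hyd. intro Hac. apply Hz. eapply pfY_up; eauto.
    - intros H Hz. apply (H c Hz). auto. }
  exists y. split; auto.
  intros x' Hx'. apply Y_ext. intro a.
  assert (Cy : C y) by (apply Hseq; apply closure_single; auto).
  assert (Cx : C x') by (apply Hx'; apply closure_single; auto).
  apply Hx' in Cy. apply Hseq in Cx. rewrite closure_single in Cy, Cx. split; auto.
Qed.

Lemma C3_iff : spectral_space Yo <->
  (forall k1 k2, fcompact L k1 -> fcompact L k2 -> fcompact L (k1 ⊓ k2)) /\ fcompact L ⊤.
Proof.
  assert (Etop : (fun _ : Y => True) = phiY ⊤).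
  { apply set_ext. intro y. split; auto. intros _. apply (pf_top L _ (pfY y)). }
  assert (Emeet : forall a b, setI (phiY a) (phiY b) = phiY (a ⊓ b)).
  { intros a b. apply set_ext. intro y. unfold setI, phiY. symmetry. apply (pf_meet L _ (pfY y)). }
  split.
  - intros [_ [Hcpt [_ [_ Hint]]]]. split.
    + intros k1 k2 H1 H2. apply compact_phiY. rewrite <- Emeet. apply Hint.
      split. apply phiY_open. apply compact_phiY; auto.
      split. apply phiY_open. apply compact_phiY; auto.
    + apply compact_phiY. rewrite <- Etop. apply Hcpt.
  - intros [Hm Ht]. split; [|split; [|split; [|split]]].
    + apply Y_top.
    + unfold compact_space. rewrite Etop. apply compact_phiY; auto.
    + apply Y_sober.
    + intros U y HU Uy. destruct (Yopen_eq U HU) as [a ->].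
      assert (H : ypt y (fsup L (fun b => fcompact L b /\ b ≤ a))) by (rewrite <- (alg a); exact Uy).
      destruct (ycp y _ H) as [k [[Hk Hka] Hyk]].
      exists (phiY k). split. split. apply phiY_open. apply compact_phiY; auto.
      split; auto. intros z Hz. eapply pfY_up; eauto.
    + intros K1 K2 [HK1 CK1] [HK2 CK2].
      destruct (Yopen_eq _ HK1) as [a1 ->]. destruct (Yopen_eq _ HK2) as [a2 ->].
      rewrite Emeet. apply compact_phiY. apply Hm; apply compact_phiY; auto.
Qed.

End XTop.

Theorem theorem5p8 (L : Frame) :
  algebraic_frame L ->
  (coherent_frame L <-> coherent_L_space (@XL_open L) (@XL_le L)) /\
  (coherent_L_space (@XL_open L) (@XL_le L) <-> spectral_space (@YL_open L)).
Proof.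
  intro alg.
  assert (C1 : coherent_frame L <-> stable L /\ fcompact L (ftop L)).
  { unfold coherent_frame, arithmetic_frame, stable. tauto. }
  assert (C2 := C2_iff L alg). assert (C3 := C3_iff L alg). assert (S := stable_iff_meets L alg).
  unfold stable in *. split; tauto.
Qed.
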